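(* Under the hypotheses and notation of the Hankel matrix representation below, the $2^N\times2^{N-1}$ submatrix $\mathbf H(:,1{:}2^{N-1})$ consisting of the first $2^{N-1}$ columns of $\mathbf H$ satisfies $$\mathbf H(:,1{:}2^{N-1})=\sum_{t_1}\cdots\sum_{t_{N-1}}\mathbf H^{(N)}_{1,t_{N-1}}(:,1)\otimes\mathbf H^{(N-1)}_{t_{N-1},t_{N-2}}\otimes\cdots\otimes\mathbf H^{(1)}_{t_1,1},$$ where $\mathbf H^{(N)}_{1,t_{N-1}}(:,1)\in\mathbb R^{2\times1}$ is the first column of $\mathbf H^{(N)}_{1,t_{N-1}}$.
   Context: Setting: $N\ge2$; $\mathbf s=[s_1,\dots,s_{2^N}]^{\mathrm T}$ given in TT format $s_{(k_1,\dots,k_N)}=\sum_{r_1=1}^{R_1}\cdots\sum_{r_{N-1}=1}^{R_{N-1}}s^{(1)}_{1,k_1,r_1}s^{(2)}_{r_1,k_2,r_2}\cdots s^{(N)}_{r_{N-1},k_N,1}$ ($k_m\in\{1,2\}$, $R_0=R_N=1$), where $(k_1,\dots,k_N)=k_1+2(k_2-1)+\cdots+2^{N-1}(k_N-1)$. $\mathbf H\in\mathbb R^{2^N\times2^N}$ has entries $\mathbf H_{ij}=s_{2^N+1-i-j}$ if $i+j\le2^N$ and $0$ otherwise. With $\mathbf P=\begin{bmatrix}0&1\\1&0\end{bmatrix}$, $\mathbf Q=\begin{bmatrix}1&0\\0&0\end{bmatrix}$, $\mathbf R=\begin{bmatrix}0&0\\0&1\end{bmatrix}$, block matrices are $\widetilde{\mathbf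 M}^{(N)}_1=[\mathbf P\ \mathbf Q]$, $\widetilde{\mathbf M}^{(n)}_1=\begin{bmatrix}\mathbf P&\mathbf Q\\\mathbf 0&\mathbf R\end{bmatrix}$ ($2\le n\le N-1$), $\widetilde{\mathbf M}^{(1)}_1=\begin{bmatrix}\mathbf Q\\\mathbf R\end{bmatrix}$, $\widetilde{\mathbf M}^{(N)}_2=[\mathbf Q\ \mathbf 0]$, $\widetilde{\mathbf M}^{(n)}_2=\begin{bmatrix}\mathbf Q&\mathbf 0\\\mathbf R&\mathbf P\end{bmatrix}$ ($2\le n\le N-1$), $\widetilde{\mathbf M}^{(1)}_2=\begin{bmatrix}\mathbf 0\\\mathbf P\end{bmatrix}$; $\mathbf M^{(n)}_{q_n,k,q_{n-1}}$ is the $(q_n,q_{n-1})$-th $2\times2$ block of $\widetilde{\mathbf M}^{(n)}_k$ ($q_N=q_0=1$). For $t_n=(r_n,q_n)\in\{1,\dots,R_n\}\times\{1,2\}$ (with $t_N=t_0=1$ meaning $(1,1)$), $\mathbf H^{(n)}_{(r_n,q_n),(r_{n-1},q_{n-1})}=\sum_{k=1}^2 s^{(n)}_{r_{n-1},k,r_n}\mathbf M^{(n)}_{q_n,k,q_{n-1}}\in\mathbb R^{2\times2}$. $\otimes$ is the Kronecker product, with the index of the right factor varying fastest. Sums over $t_n$ range over all $2R_n$ pairs. *)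

(* Defs.v *)
From HB Require Import structures.
From mathcomp Require Import all_boot all_order all_algebra.
Set Implicit Arguments. Unset Strict Implicit. Unset Printing Implicit Defensive.
Import Order.TTheory GRing.Theory Num.Theory.
Local Open Scope ring_scope.

Lemma ord_mul_pos_r (m1 m2 : nat) (i : 'I_(m1 * m2)) : (0 < m2)%N.
Proof.
have : (nat_of_ord i < m1 * m2)%N := ltn_ord i.
move: (nat_of_ord i); clear i; by case: m2 => // k; rewrite muln0.
Qed.

Lemma ord_div_proof (m1 m2 : nat) (i : 'I_(m1 * m2)) : (i %/ m2 < m1)%N.
Proof. by rewrite ltn_divLR ?(ord_mul_pos_r i) // mulnC. Qed.

Lemma ord_mod_proof (m1 m2 : nat) (i : 'I_(m1 * m2)) : (i %% m2 < m2)%N.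
Proof. by rewrite ltn_pmod ?(ord_mul_pos_r i). Qed.

Definition ord_hi (m1 m2 : nat) (i : 'I_(m1 * m2)) : 'I_m1 := Ordinal (ord_div_proof i).
Definition ord_lo (m1 m2 : nat) (i : 'I_(m1 * m2)) : 'I_m2 := Ordinal (ord_mod_proof i).

Definition kron (R : pzRingType) (m1 n1 m2 n2 : nat)
  (A : 'M[R]_(m1, n1)) (B : 'M[R]_(m2, n2)) : 'M[R]_(m1 * m2, n1 * n2) :=
  \matrix_(i, j) (A (ord_hi i) (ord_hi j) * B (ord_lo i) (ord_lo j)).

Fixpoint kron_chain (R : pzRingType) (n : nat) (f : nat -> 'M[R]_2) : 'M[R]_(2 ^ n) :=
  match n return 'M[R]_(2 ^ n) with
  | 0 => 1%:M
  | n'.+1 => castmx (esym (expnS 2 n'), esym (expnS 2 n'))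
                    (kron (f n'.+1) (kron_chain n' f))
  end.

Fixpoint multi_idx (b : seq nat) : seq (seq nat) :=
  match b with
  | [::] => [:: [::]]
  | n :: b' => [seq i :: t | i <- iota 0 n, t <- multi_idx b']
  end.

(* ---------- Conventions: everything is 0-based.
   Rk n       = R_n  (n = 0..N), with R_0 = R_N = 1.
   core n r k r' = s^{(n)}_{r+1, k+1, r'+1}  for n = 1..N,
                  r < R_{n-1}, k < 2, r' < R_n.
   Given rs = [r_1; ...; r_{N-1}] (0-based), full_idx rs = [r_0; r_1; ...; r_N]
   with r_0 = r_N = 0 (i.e. the 1-based index 1). *)
Definition full_idx (rs : seq nat) : seq nat := 0%N :: rcons rs 0%N.

Definition rank_bounds (N : nat) (Rk : nat -> nat) : seq nat :=
  [seq Rk n | n <- iota 1 N.-1].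

(* binary digit m of j: k_{m+1} - 1 for the 0-based index j of s *)
Definition digit (j m : nat) : nat := (j %/ 2 ^ m) %% 2.

(* s_{j+1} (0-based index j < 2^N), given in TT format *)
Definition tt_entry (R : pzRingType) (N : nat) (Rk : nat -> nat)
  (core : nat -> nat -> nat -> nat -> R) (j : nat) : R :=
  \sum_(rs <- multi_idx (rank_bounds N Rk))
     \prod_(m < N) core m.+1 (nth 0%N (full_idx rs) m) (digit j m)
                             (nth 0%N (full_idx rs) m.+1).

(* The Hankel matrix H (0-based i, j): H_{i+1,j+1} = s_{2^N - 1 - i - j}
   if (i+1)+(j+1) <= 2^N, else 0. *)
Definition hankel (R : pzRingType) (N : nat) (Rk : nat -> nat)
  (core : nat -> nat -> nat -> nat -> R) : 'M[R]_(2 ^ N) :=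
  \matrix_(i, j) (if (i + j + 2 <= 2 ^ N)%N
                  then tt_entry N Rk core (2 ^ N - 2 - i - j)%N
                  else 0).

Lemma exp_half_le (N : nat) : (2 ^ (N - 1) <= 2 ^ N)%N.
Proof. by rewrite leq_pexp2l // leq_subr. Qed.

Definition hankel_left (R : pzRingType) (N : nat) (Rk : nat -> nat)
  (core : nat -> nat -> nat -> nat -> R) : 'M[R]_(2 ^ N, 2 ^ (N - 1)) :=
  colsub (widen_ord (exp_half_le N)) (hankel N Rk core).

Section Blocks.
Variable R : pzRingType.

Definition Pm : 'M[R]_2 := \matrix_(i, j) (if i != j then 1 else 0).
Definition Qm : 'M[R]_2 := \matrix_(i, j) (if (i == 0 :> nat) && (j == 0 :> nat) then 1 else 0).
Definition Rm : 'M[R]_2 := \matrix_(i, j) (if (i == 1 :> nat) && (j == 1 :> nat) then 1 else 0).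

(* k = 0,1 stand for the paper's k = 1,2 *)
Definition Mt_last (k : nat) : 'M[R]_(2, 2 + 2) :=
  if k == 0%N then row_mx Pm Qm else row_mx Qm 0.
Definition Mt_mid (k : nat) : 'M[R]_(2 + 2, 2 + 2) :=
  if k == 0%N then block_mx Pm Qm 0 Rm else block_mx Qm 0 Rm Pm.
Definition Mt_first (k : nat) : 'M[R]_(2 + 2, 2) :=
  if k == 0%N then col_mx Qm Rm else col_mx 0 Pm.

Definition blk_row (A : 'M[R]_(2, 2 + 2)) (q' : nat) : 'M[R]_2 :=
  if q' == 0%N then lsubmx A else rsubmx A.
Definition blk_col (A : 'M[R]_(2 + 2, 2)) (q : nat) : 'M[R]_2 :=
  if q == 0%N then usubmx A else dsubmx A.
Definition blk (A : 'M[R]_(2 + 2, 2 + 2)) (q q' : nat) : 'M[R]_2 :=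
  blk_row (if q == 0%N then usubmx A else dsubmx A) q'.

(* M^{(n)}_{q_n, k, q_{n-1}} (0-based q_n, k, q_{n-1}); for n = N only
   q_N = 0 occurs, for n = 1 only q_0 = 0 occurs. *)
Definition Mblock (N n q k q' : nat) : 'M[R]_2 :=
  if n == N then blk_row (Mt_last k) q'
  else if n == 1%N then blk_col (Mt_first k) q
  else blk (Mt_mid k) q q'.

Definition Hcore (N : nat) (core : nat -> nat -> nat -> nat -> R)
  (n rn qn rn1 qn1 : nat) : 'M[R]_2 :=
  \sum_(k < 2) core n rn1 k rn *: Mblock N n qn k qn1.

End Blocks.

Lemma exp_split (N : nat) : (0 < N)%N -> (2 ^ N = 2 * 2 ^ (N - 1))%N.
Proof. by case: N => // n _; rewrite subn1 /= expnS. Qed.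

(* Main.v *)
Require Import Defs.
From HB Require Import structures.
From mathcomp Require Import all_boot all_order all_algebra.
From mathcomp Require Import zify ring lra.
Import Order.TTheory GRing.Theory Num.Theory.
Local Open Scope ring_scope.

Lemma digit_lt2 i m : (digit i m < 2)%N.
Proof. by rewrite /digit ltn_pmod. Qed.

Lemma digit_mod i m n : (m < n)%N -> digit (i %% 2 ^ n) m = digit i m.
Proof.
move=> lt_mn; rewrite /digit.
have Hn : (2 ^ n = 2 ^ (n - m).-1 * 2 * 2 ^ m)%N.
  by rewrite -expnSr prednK ?subn_gt0 // -expnD subnK // ltnW.
rewrite {2}(divn_eq i (2 ^ n)) {3}Hn.
by rewrite !mulnA divnMDl ?expn_gt0 // modnMDl.
Qed.

Lemma digit_small i m : (i < 2 ^ m)%N -> digit i m = 0%N.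
Proof. by move=> h; rewrite /digit divn_small. Qed.

Lemma digit_top i n : (i < 2 ^ n.+1)%N -> digit i n = (i %/ 2 ^ n)%N.
Proof.
move=> h; rewrite /digit modn_small // ltn_divLR ?expn_gt0 //.
by rewrite mulnC -expnSr.
Qed.

Lemma digit_sum n i : (i < 2 ^ n)%N -> (\sum_(m < n) digit i m * 2 ^ m)%N = i.
Proof.
elim: n i => [|n IH] i hi.
  by rewrite big_ord0; move: hi; rewrite expn0; case: i.
rewrite big_ord_recr /=.
have -> : (\sum_(m < n) digit i m * 2 ^ m = \sum_(m < n) digit (i %% 2 ^ n) m * 2 ^ m)%N.
  by apply: eq_bigr => m _; rewrite digit_mod.
by rewrite IH ?ltn_pmod ?expn_gt0 // digit_top // addnC -divn_eq.
Qed.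

Lemma digit_add_low K n m : (m < n)%N -> digit (K + 2 ^ n) m = digit K m.
Proof. by move=> h; rewrite -(digit_mod _ _ _ h) modnDr digit_mod. Qed.

Lemma digit_add_top K n : (K < 2 ^ n)%N -> digit (K + 2 ^ n) n = 1%N.
Proof.
move=> h; rewrite /digit divnDr ?dvdnn // divnn expn_gt0 /= divn_small //.
Qed.

Lemma sum_t n : (\sum_(m < n.+1) ((m : nat) != 0%N) * 2 ^ m = 2 ^ n.+1 - 2)%N.
Proof.
elim: n => [|n IH]; first by rewrite big_ord1.
rewrite big_ord_recr /= IH.
have : (2 <= 2 ^ n.+1)%N by rewrite -{1}(expn1 2) leq_pexp2l.
rewrite !expnS mul1n; lia.
Qed.

Lemma sum_shift (R : comPzRingType) a (G : nat -> R) :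
  \sum_(a <= i < a + a) G i = \sum_(0 <= i < a) G (i + a)%N.
Proof. by rewrite -{1}(add0n a) big_addn addnK. Qed.

Lemma prod_sum2 (R : comPzRingType) n (F : nat -> nat -> R) :
  \prod_(m < n) \sum_(k < 2) F m k =
  \sum_(K < 2 ^ n) \prod_(m < n) F m (digit K m).
Proof.
elim: n => [|n IH].
  by rewrite big_ord0 expn0 big_ord1 big_ord0.
rewrite big_ord_recr /= IH big_ord_recl big_ord1 mulrDr !mulr_suml.
have E n' (G : nat -> R) : \sum_(K < n') G K = \sum_(0 <= K < n') G K.
  by rewrite big_mkord.
rewrite -(big_mkord xpredT (fun K => \prod_(m < n) F m (digit K m) * F n 0%N)).
rewrite -(big_mkord xpredT (fun K => \prod_(m < n) F m (digit K m) * F n 1%N)).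
rewrite -(big_mkord xpredT (fun K => \prod_(m < n.+1) F m (digit K m))).
rewrite expnS mul2n -addnn.
rewrite [RHS](big_cat_nat (n := (2 ^ n)%N)) ?leq_addr //= sum_shift.
congr (_ + _); apply: eq_big_nat => K /andP [_ hK].
  rewrite big_ord_recr /= digit_small //; congr (_ * _).
rewrite big_ord_recr /= digit_add_top //; congr (_ * _).
by apply: eq_bigr => m _; rewrite digit_add_low.
Qed.

Lemma kron_chainE (R : comPzRingType) n (f : nat -> 'M[R]_2) (i j : 'I_(2 ^ n)) :
  kron_chain n f i j =
  \prod_(m < n) f m.+1 (inord (digit i m)) (inord (digit j m)).
Proof.
elim: n f i j => [|n IH] f i j.
  rewrite big_ord0 /= mxE.
  have Hi : (i < 1)%N := ltn_ord i. have Hj : (j < 1)%N := ltn_ord j.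
  suff -> : i = j by rewrite eqxx.
  move: Hi Hj; rewrite !ltnS !leqn0 => /eqP hi /eqP hj.
  by apply: val_inj; rewrite /= hi hj.
rewrite /= castmxE /kron mxE IH big_ord_recr /= mulrC; congr (_ * _).
  apply: eq_bigr => m _; congr (f _ _ _); apply: val_inj => /=;
    by rewrite digit_mod.
have hi : (i < 2 ^ n.+1)%N := ltn_ord i.
have hj : (j < 2 ^ n.+1)%N := ltn_ord j.
by congr (f _ _ _); apply: val_inj; rewrite /= inordK ?digit_lt2 // digit_top.
Qed.

Lemma big_multi_cons (R : comPzRingType) b bs (F : seq nat -> R) :
  \sum_(s <- multi_idx (b :: bs)) F s =
  \sum_(i <- iota 0 b) \sum_(t <- multi_idx bs) F (i :: t).
Proof. by rewrite /= big_allpairs_dep. Qed.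

Lemma mem_multi_idx b s : s \in multi_idx b ->
  size s = size b /\ (forall x, x \in s -> exists2 y, y \in b & (x < y)%N).
Proof.
elim: b s => [|n b IH] s /=.
  by rewrite inE => /eqP ->.
case/allpairsP => [[i t]] /= [hi ht ->].
have [hs hx] := IH _ ht.
split; first by rewrite /= hs.
move=> x; rewrite inE => /orP [/eqP ->|hxt].
  by exists n; rewrite ?inE ?eqxx //; move: hi; rewrite mem_iota.
by have [y hy hxy] := hx _ hxt; exists y; rewrite // inE hy orbT.
Qed.

Lemma sum_pow_split n (x : nat -> nat) :
  (\sum_(m < n.+2) x m * 2 ^ m = x 0%N + 2 * \sum_(m < n.+1) x m.+1 * 2 ^ m)%N.
Proof.
rewrite big_ord_recl expn0 muln1 big_distrr /=; congr (_ + _)%N.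
by apply: eq_bigr => m _; rewrite expnS mulnCA.
Qed.

Lemma carry (R : comPzRingType) n (x t : nat -> nat) (c e : nat) :
  (c < 2)%N -> (e < 2)%N -> (forall m, m <= n -> t m < 2)%N ->
  (forall m, m <= n -> x m + (if m == 0 then c else 1) <= t m + 3)%N ->
  \sum_(qs <- multi_idx (nseq n 2)) \prod_(m < n.+1)
     ((x m + nth 0 (c :: rcons qs e) m == t m + 2 * nth 0 (c :: rcons qs e) m.+1)%N%:R : R)
  = ((\sum_(m < n.+1) x m * 2 ^ m + c == \sum_(m < n.+1) t m * 2 ^ m + e * 2 ^ n.+1)%N%:R).
Proof.
elim: n x t c => [|n IH] x t c hc he ht hx.
  by rewrite /= big_seq1 !big_ord1 /= !muln1 expn1 (mulnC e) addnC.
have step i : (i < 2)%N ->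
  \sum_(qs <- multi_idx (nseq n 2)) \prod_(m < n.+2)
     ((x m + nth 0 (c :: rcons (i :: qs) e) m == t m + 2 * nth 0 (c :: rcons (i :: qs) e) m.+1)%N%:R : R)
  = (x 0 + c == t 0 + 2 * i)%N%:R *
    ((\sum_(m < n.+1) x m.+1 * 2 ^ m + i == \sum_(m < n.+1) t m.+1 * 2 ^ m + e * 2 ^ n.+1)%N%:R).
  move=> hi; rewrite -(IH (fun m => x m.+1) (fun m => t m.+1) i) //.
  - by rewrite mulr_sumr; apply: eq_bigr => qs _; rewrite big_ord_recl.
  - by move=> m hm; apply: ht.
  - move=> m hm; have := hx m.+1 hm; case: (m == 0%N) => /=; lia.
rewrite big_multi_cons (_ : iota 0 2 = [:: 0; 1]%N) // !big_cons big_nil addr0.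
rewrite !step // !sum_pow_split.
set X := (\sum_(m < n.+1) x m.+1 * 2 ^ m)%N.
set T := (\sum_(m < n.+1) t m.+1 * 2 ^ m)%N.
rewrite (expnS 2 n.+1) mulnCA.
set P := (e * 2 ^ n.+1)%N.
rewrite -!natrM -natrD; congr (_ %:R).
have := hx 0%N isT; have := ht 0%N isT; rewrite eqxx => h1 h2.
by do 5 (case: eqP => ? /=); lia.
Qed.

Section BlockLemmas.
Variable R : comPzRingType.

Lemma PmE a b : (a < 2)%N -> (b < 2)%N ->
  (Pm R) (inord a) (inord b) = (a != b)%:R.
Proof.
by move=> ha hb; rewrite mxE -val_eqE /= !inordK //; case: (a != b).
Qed.

Lemma QmE a b : (a < 2)%N -> (b < 2)%N ->
  (Qm R) (inord a) (inord b) = ((a == 0%N) && (b == 0%N))%:R.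
Proof. by move=> ha hb; rewrite mxE !inordK //; case: (_ && _). Qed.

Lemma RmE a b : (a < 2)%N -> (b < 2)%N ->
  (Rm R) (inord a) (inord b) = ((a == 1%N) && (b == 1%N))%:R.
Proof. by move=> ha hb; rewrite mxE !inordK //; case: (_ && _). Qed.

Lemma ZmE (a b : 'I_2) : (0 : 'M[R]_2) a b = 0.
Proof. by rewrite mxE. Qed.

Lemma Mblock_entry N m q' k q a b : (m < N)%N -> (2 <= N)%N ->
  (a < 2)%N -> (b < 2)%N -> (k < 2)%N -> (q < 2)%N -> (q' < 2)%N ->
  (m == 0%N -> q = 0%N) -> (m.+1 == N -> q' = 0%N /\ b = 0%N) ->
  Mblock R N m.+1 q' k q (inord a) (inord b) =
  ((a + b + k + q == (m != 0%N) + 2 * q')%N)%:R.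
Proof.
move=> hm hN ha hb hk hq hq' h0 hl; rewrite /Mblock.
case: eqP => [hmN|hmN].
  have [-> ->] := hl (introT eqP hmN).
  have -> : (m != 0%N) by apply/eqP => m0; move: hmN hN; rewrite m0 => <-.
  rewrite /Mt_last /blk_row; clear h0 hl.
  move: ha hk hq; case: a => [|[|//]] _; case: k => [|[|//]] _; case: q => [|[|//]] _ /=;
    rewrite ?row_mxKl ?row_mxKr ?PmE ?QmE ?RmE ?ZmE //.
case: eqP => [m0|m0].
  have m00 : m = 0%N by case: m m0 {hm h0 hl hmN}.
  rewrite (h0 (introT eqP m00)) m00 /Mt_first /blk_col; clear h0 hl hq.
  move: ha hb hk hq'; case: a => [|[|//]] _; case: b => [|[|//]] _;
    case: k => [|[|//]] _; case: q' => [|[|//]] _ /=;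
    rewrite ?col_mxKu ?col_mxKd ?PmE ?QmE ?RmE ?ZmE //.
have -> : (m != 0%N) by apply/eqP => m00; apply: m0; rewrite m00.
rewrite /Mt_mid /blk !block_mxEv; clear h0 hl.
move: ha hb hk hq hq'; case: a => [|[|//]] _; case: b => [|[|//]] _;
  case: k => [|[|//]] _; case: q => [|[|//]] _; case: q' => [|[|//]] _ /=;
  rewrite /blk_row ?col_mxKu ?col_mxKd ?row_mxKl ?row_mxKr ?PmE ?QmE ?RmE ?ZmE //.
Qed.

End BlockLemmas.

Lemma kron_chainE1 (R : comPzRingType) n' n (e : n' = n) (f : nat -> 'M[R]_2) (i j : 'I_(2 ^ n')) :
  kron_chain n' f i j =
  \prod_(m < n) f m.+1 (inord (digit i m)) (inord (digit j m)).
Proof. by subst n'; apply: kron_chainE. Qed.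

Lemma HcoreE (R : comPzRingType) N core n rn qn rn1 qn1 a b :
  Hcore (R:=R) N core n rn qn rn1 qn1 a b =
  \sum_(k < 2) core n rn1 k rn * Mblock R N n qn k qn1 a b.
Proof. by rewrite summxE; apply: eq_bigr => k _; rewrite mxE. Qed.

Lemma nth_full_lt2 qs k : (forall x, x \in qs -> (x < 2)%N) ->
  (nth 0 (full_idx qs) k < 2)%N.
Proof.
move=> h; rewrite /full_idx; case: k => [|k] //=.
rewrite nth_rcons; case: ifP => hk; first by apply: h; rewrite mem_nth.
by case: (_ == _).
Qed.

Lemma nth_full_last qs n : size qs = n -> nth 0 (full_idx qs) n.+1 = 0%N.
Proof. by move=> <-; rewrite /full_idx /= nth_rcons ltnn eqxx. Qed.

Lemma pick_sum (R : comPzRingType) M (f : nat -> R) a : (2 <= M)%N ->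
  \sum_(K < M) f K * ((a + K == M - 2)%N)%:R =
  if (a + 2 <= M)%N then f (M - 2 - a)%N else 0.
Proof.
move=> hM; case: ifP => h.
  have hK : (M - 2 - a < M)%N by lia.
  rewrite (bigD1 (Ordinal hK)) //= big1 ?addr0.
    by rewrite (_ : (a + (M - 2 - a) == M - 2)%N) ?mulr1 //; apply/eqP; lia.
  move=> K hKn; rewrite (_ : (a + K == M - 2)%N = false) ?mulr0 //.
  apply/eqP => hh; move/eqP: hKn; apply; apply: val_inj => /=; lia.
apply: big1 => K _; rewrite (_ : (a + K == M - 2)%N = false) ?mulr0 //.
apply/eqP => hh; move/negbT: h; rewrite -ltnNge; lia.
Qed.

Lemma digit_ord_lo p q (x : 'I_(p * 2 ^ q)) m : (m < q)%N ->
  digit (ord_lo x) m = digit x m.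
Proof. by move=> h; rewrite /= digit_mod. Qed.


Theorem mainTheorem7 (R : realFieldType) (N : nat) (hN : (2 <= N)%N)
  (Rk : nat -> nat) (hR0 : Rk 0%N = 1%N) (hRN : Rk N = 1%N)
  (core : nat -> nat -> nat -> nat -> R) :
  hankel_left N Rk core =
  \sum_(rs <- multi_idx (rank_bounds N Rk))
   \sum_(qs <- multi_idx (nseq N.-1 2%N))
     castmx (esym (exp_split (ltnW hN)), mul1n _)
       (kron (col 0 (Hcore N core N 0 0
                       (nth 0%N (full_idx rs) N.-1) (nth 0%N (full_idx qs) N.-1)))
             (kron_chain (N - 1) (fun n =>
                Hcore N core n (nth 0%N (full_idx rs) n) (nth 0%N (full_idx qs) n)
                               (nth 0%N (full_idx rs) n.-1) (nth 0%N (full_idx qs) n.-1)))).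
Proof.
case: N hN hRN => [|n] // hN hRN.
apply/matrixP => i j.
rewrite /hankel_left !mxE /= summxE.
have hi : (i < 2 ^ n.+1)%N := ltn_ord i.
have hj : (j < 2 ^ n)%N.
  have h1 := ltn_ord j; have h2 : (n.+1 - 1 = n)%N by rewrite subn1.
  by move: h1; rewrite [X in (_ < 2 ^ X)%N]h2.
have hj' : (j < 2 ^ n.+1)%N by apply: (leq_trans hj); rewrite leq_pexp2l.
set FI := fun (qs : seq nat) (K : nat) => \prod_(m < n.+1)
  ((digit i m + digit j m + digit K m + nth 0 (full_idx qs) m ==
    ((m : nat) != 0%N) + 2 * nth 0 (full_idx qs) m.+1)%N%:R : R).
set FC := fun (rs : seq nat) (K : nat) => \prod_(m < n.+1)
   core m.+1 (nth 0%N (full_idx rs) m) (digit K m) (nth 0%N (full_idx rs) m.+1).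
symmetry; transitivity (\sum_(rs <- multi_idx (rank_bounds n.+1 Rk))
   \sum_(qs <- multi_idx (nseq n 2%N)) \sum_(K < 2 ^ n.+1) FC rs K * FI qs K).
  rewrite big_seq [RHS]big_seq; apply: eq_bigr => rs Hrs.
  rewrite summxE big_seq [RHS]big_seq; apply: eq_bigr => qs Hqs.
  have [szr _] := mem_multi_idx _ _ Hrs.
  have [szq hq] := mem_multi_idx _ _ Hqs.
  rewrite size_map size_iota in szr; rewrite size_nseq in szq.
  have hq2 : forall x, x \in qs -> (x < 2)%N.
    by move=> x /hq [y]; rewrite mem_nseq => /andP [_ /eqP ->].
  rewrite castmxE !mxE (@kron_chainE1 R _ n (subn1 n.+1)).
  rewrite (_ : ord_hi _ = inord (digit i n)); last first.
    by apply: val_inj; rewrite /= inordK ?digit_lt2 // digit_top // subn1.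
  under eq_bigr => m _ do rewrite !digit_ord_lo ?subn1 //=.
  have szr' : size rs = n by rewrite szr.
  transitivity (\prod_(m < n.+1) Hcore n.+1 core m.+1 (nth 0 (full_idx rs) m.+1)
     (nth 0 (full_idx qs) m.+1) (nth 0 (full_idx rs) m) (nth 0 (full_idx qs) m)
     (inord (digit i m)) (inord (digit j m))).
    rewrite big_ord_recr /= mulrC !nth_rcons szr' szq ltnn eqxx (digit_small _ _ hj).
    congr (_ * _); congr (Hcore _ _ _ _ _ _ _ _ _).
    by apply: val_inj; rewrite /= inordK.
  under eq_bigr => m _ do rewrite HcoreE.
  rewrite (@prod_sum2 R n.+1 (fun m k => core m.+1 (nth 0 (full_idx rs) m) k (nth 0 (full_idx rs) m.+1) *
     Mblock R n.+1 m.+1 (nth 0 (full_idx qs) m.+1) k (nth 0 (full_idx qs) m)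
       (inord (digit i m)) (inord (digit j m)))). apply: eq_bigr => K _; rewrite /FC /FI -big_split /=.
  apply: eq_bigr => m _; congr (_ * _).
  apply: Mblock_entry => //; rewrite ?digit_lt2 //.
  - exact: nth_full_lt2.
  - exact: (nth_full_lt2 qs m.+1 hq2).
  - by move=> /eqP ->.
  - move=> /eqP [->]; rewrite nth_rcons szq ltnn eqxx; split=> //.
    exact: digit_small.
under eq_bigr => rs _ do rewrite exchange_big /=.
rewrite exchange_big /=.
under eq_bigr => K _.
  under eq_bigr => rs _ do rewrite -mulr_sumr.
  rewrite -mulr_suml.
  rewrite /FI /full_idx (@carry R n (fun m => digit i m + digit j m + digit K m)%N
     (fun m => (m != 0%N) : nat) 0%N 0%N) //; first last.
  - move=> m hm; have := digit_lt2 i m; have := digit_lt2 j m; have := digit_lt2 K m.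
    by case: (m == 0%N) => /=; lia.
  - by move=> m _; case: (m != 0%N).
  rewrite sum_t.
  rewrite [X in (X == _)%N](_ : _ = (i + j + K)%N); last first.
    rewrite addn0; under eq_bigr => m _ do rewrite !mulnDl.
    by rewrite !big_split /= !digit_sum.
  rewrite [X in (_ == X)%N](_ : _ = (2 ^ n.+1 - 2)%N); last by lia.
  over.
rewrite /= (@pick_sum R (2 ^ n.+1) (tt_entry n.+1 Rk core) (i + j)%N).
  by rewrite subnDA.
by rewrite -{1}(expn1 2) leq_pexp2l.
Qed.
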